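(* Let $f\not\equiv 0$ be an odd entire function such that for all $x,y,z,w\in\mathbb{C}$ $$f(x)f(y)f(z)f(w)-f\Big(\tfrac{x+y+z-w}{2}\Big)f\Big(\tfrac{x+y-z+w}{2}\Big)f\Big(\tfrac{x-y+z+w}{2}\Big)f\Big(\tfrac{-x+y+z+w}{2}\Big)$$ $$-f\Big(\tfrac{x+y+z+w}{2}\Big)f\Big(\tfrac{x+y-z-w}{2}\Big)f\Big(\tfrac{x-y+z-w}{2}\Big)f\Big(\tfrac{x-y-z+w}{2}\Big)=0.$$ Then $f$ satisfies $$(f'(0))^3 f(2z)=f(z)^4\,(\ln f(z))''' \quad\text{for all } z,$$ where $(\ln f)'''$ denotes the meromorphic function $(f'/f)''$; equivalently $(f'(0))^3f(2z)=f^3f'''-3f^2f'f''+2f(f')^3$ with $f=f(z)$. *)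

(* Defs.v *)
From Stdlib Require Import Reals.
From Coquelicot Require Export Coquelicot.

Definition Cderiv (f : C -> C) (z l : C) : Prop :=
  @is_derive C_AbsRing C_NormedModule f z l.

Definition entire (f : C -> C) : Prop :=
  forall z : C, exists l : C, Cderiv f z l.

Definition odd_fun (f : C -> C) : Prop := forall z : C, f (Copp z) = Copp (f z).

Open Scope C_scope.
Definition quartic_eq (f : C -> C) : Prop :=
  forall x y z w : C,
    f x * f y * f z * f w
    - f ((x + y + z - w) / 2) * f ((x + y - z + w) / 2)
      * f ((x - y + z + w) / 2) * f ((- x + y + z + w) / 2)
    - f ((x + y + z + w) / 2) * f ((x + y - z - w) / 2)
      * f ((x - y + z - w) / 2) * f ((x - y - z + w) / 2)
    = 0.
Close Scope C_scope.

(* Main.v *)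
Require Import Defs.
From Stdlib Require Import Reals.
From Coquelicot Require Import Coquelicot.
From Stdlib Require Import Ring Field Lra.
Open Scope C_scope.

Lemma br (f : C -> C) z l : @is_derive C_AbsRing C_NormedModule f z l -> @is_derive C_AbsRing (AbsRing_NormedModule C_AbsRing) f z l.
Proof. unfold is_derive, filterdiff, is_domin. intros [[H1 H2 H3] H5]. split; [split|]; auto. Qed.
Lemma br2 (f : C -> C) z l : @is_derive C_AbsRing (AbsRing_NormedModule C_AbsRing) f z l -> @is_derive C_AbsRing C_NormedModule f z l.
Proof. unfold is_derive, filterdiff, is_domin. intros [[H1 H2 H3] H5]. split; [split|]; auto. Qed.

Lemma D_mul (f g : C -> C) (z a b : C) :
  Cderiv f z a -> Cderiv g z b -> Cderiv (fun x => f x * g x) z (a * g z + f z * b).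
Proof.
  intros Hf Hg. unfold Cderiv in *.
  apply br2. exact (@is_derive_mult C_AbsRing f g z a b (br _ _ _ Hf) (br _ _ _ Hg) Cmult_comm).
Qed.

Lemma D_add (f g : C -> C) (z a b : C) :
  Cderiv f z a -> Cderiv g z b -> Cderiv (fun x => f x + g x) z (a + b).
Proof.
  intros Hf Hg. unfold Cderiv in *.
  exact (@is_derive_plus C_AbsRing C_NormedModule f g z a b Hf Hg).
Qed.

Lemma D_const (c z : C) : Cderiv (fun _ => c) z 0.
Proof. exact (@is_derive_const C_AbsRing C_NormedModule c z). Qed.

Lemma D_id (z : C) : Cderiv (fun x => x) z 1.
Proof. apply br2. exact (@is_derive_id C_AbsRing z). Qed.

Lemma D_eq (f : C -> C) (z a b : C) : Cderiv f z a -> a = b -> Cderiv f z b.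
Proof. intros H ->; exact H. Qed.

Lemma D_sub (f g : C -> C) (z a b : C) :
  Cderiv f z a -> Cderiv g z b -> Cderiv (fun x => f x - g x) z (a - b).
Proof.
  intros Hf Hg.
  assert (Hn : Cderiv (fun x => (-1) * g x) z (0 * g z + (-1) * b))
    by (apply D_mul; [apply D_const | exact Hg]).
  eapply D_eq.
  - unfold Cderiv. eapply is_derive_ext; [| exact (D_add _ _ _ _ _ Hf Hn)].
    intro t; simpl. ring.
  - ring.
Qed.

Lemma D_lin (g g' : C -> C) (c d t : C) :
  (forall x, Cderiv g x (g' x)) ->
  Cderiv (fun t => g (c * t + d)) t (c * g' (c * t + d)).
Proof.
  intros Hg.
  assert (Hl : Cderiv (fun t => c * t + d) t c).
  { eapply D_eq. apply D_add; [apply D_mul; [apply D_const | apply D_id] | apply D_const].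
    cbv beta; ring. }
  unfold Cderiv in *.
  exact (@is_derive_comp C_AbsRing C_NormedModule g (fun t => c * t + d) t _ c (Hg _) (br _ _ _ Hl)).
Qed.

Lemma D_zero_at (H : C -> C) (t a : C) :
  (forall t, H t = 0) -> Cderiv H t a -> a = 0.
Proof.
  intros H0 HDt.
  assert (Hz : Cderiv H t 0).
  { unfold Cderiv. eapply is_derive_ext; [| exact (D_const 0 t)]. intro s; simpl; auto. }
  rewrite <- (is_C_derive_unique _ _ _ HDt).
  exact (is_C_derive_unique _ _ _ Hz).
Qed.

Lemma D_zero (H D : C -> C) :
  (forall t, H t = 0) -> (forall t, Cderiv H t (D t)) -> forall t, D t = 0.
Proof.
  intros H0 HD t.
  assert (Hz : Cderiv H t 0).
  { unfold Cderiv. eapply is_derive_ext; [| exact (D_const 0 t)]. intro s; simpl; auto. }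
  rewrite <- (is_C_derive_unique _ _ _ (HD t)).
  exact (is_C_derive_unique _ _ _ Hz).
Qed.

Lemma sub0 (a b : C) : a - b = 0 -> a = b.
Proof. intro H. replace a with (a - b + b) by ring. rewrite H. ring. Qed.

Ltac dtac :=
  repeat match goal with
  | |- Cderiv (fun _ => ?c) _ _ => apply D_const
  | |- Cderiv (fun x => _ - _) _ _ => apply D_sub
  | |- Cderiv (fun x => _ + _) _ _ => apply D_add
  | |- Cderiv (fun x => _ * _) _ _ => apply D_mul
  | |- Cderiv (fun x => _ (_ * x + _)) _ _ => apply D_lin; eassumption
  end.

(* f1, f2, f3 are f', f'', f''' (they exist since f is entire) *)
Theorem lemma4 (f : C -> C) :
  entire f ->
  odd_fun f ->
  (exists z0 : C, f z0 <> 0) ->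
  quartic_eq f ->
  forall f1 f2 f3 : C -> C,
    (forall z, Cderiv f z (f1 z)) ->
    (forall z, Cderiv f1 z (f2 z)) ->
    (forall z, Cderiv f2 z (f3 z)) ->
    forall z : C,
      (f1 0) ^ 3 * f (2 * z)
      = (f z) ^ 3 * f3 z - 3 * (f z) ^ 2 * f1 z * f2 z + 2 * f z * (f1 z) ^ 3.
Proof.
  intros _ Hodd _ Hq f1 f2 f3 Hd1 Hd2 Hd3 z.
  assert (Hf0 : f 0 = 0).
  { pose proof (Hodd 0) as H. replace (Copp (RtoC 0)) with (RtoC 0) in H by ring.
    assert (2 * f 0 = 0) as H2 by (replace (2 * f 0) with (f 0 + f 0) by ring; rewrite H at 1; ring).
    replace (f 0) with ((/2) * (2 * f 0)) by (field; intro HH; injection HH; lra).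
    rewrite H2; ring. }
  set (F := f z).
  set (H0 := fun t =>
     f (1*t+z) * f (1*t+z) * f (1*t+z) * f ((-1)*t+z) - f (2*t+z) * (F*F*F)
     + f (1*t+2*z) * (f (1*t+0) * f (1*t+0) * f (1*t+0))).
  set (H1 := fun t =>
     3 * f (1*t+z) * f (1*t+z) * f1 (1*t+z) * f ((-1)*t+z)
     - f (1*t+z) * f (1*t+z) * f (1*t+z) * f1 ((-1)*t+z)
     - 2 * f1 (2*t+z) * (F*F*F)
     + f1 (1*t+2*z) * (f (1*t+0) * f (1*t+0) * f (1*t+0))
     + 3 * f (1*t+2*z) * (f (1*t+0) * f (1*t+0) * f1 (1*t+0))).
  set (H2 := fun t =>
     6 * f (1*t+z) * f1 (1*t+z) * f1 (1*t+z) * f ((-1)*t+z)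
     + 3 * f (1*t+z) * f (1*t+z) * f2 (1*t+z) * f ((-1)*t+z)
     - 6 * f (1*t+z) * f (1*t+z) * f1 (1*t+z) * f1 ((-1)*t+z)
     + f (1*t+z) * f (1*t+z) * f (1*t+z) * f2 ((-1)*t+z)
     - 4 * f2 (2*t+z) * (F*F*F)
     + f2 (1*t+2*z) * (f (1*t+0) * f (1*t+0) * f (1*t+0))
     + 6 * f1 (1*t+2*z) * (f (1*t+0) * f (1*t+0) * f1 (1*t+0))
     + 6 * f (1*t+2*z) * (f (1*t+0) * f1 (1*t+0) * f1 (1*t+0))
     + 3 * f (1*t+2*z) * (f (1*t+0) * f (1*t+0) * f2 (1*t+0))).
  assert (HH0 : forall t, H0 t = 0).
  { intro t. unfold H0. pose proof (Hq (1*t+z) (1*t+z) (1*t+z) ((-1)*t+z)) as E.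
    assert (two : RtoC 2 <> 0) by (intro HH; injection HH; lra).
    replace ((1 * t + z + (1 * t + z) + (1 * t + z) - (-1 * t + z)) / 2) with (2*t+z) in E by (field; exact two).
    replace ((1 * t + z + (1 * t + z) - (1 * t + z) + (-1 * t + z)) / 2) with z in E by (field; exact two).
    replace ((1 * t + z - (1 * t + z) + (1 * t + z) + (-1 * t + z)) / 2) with z in E by (field; exact two).
    replace ((- (1 * t + z) + (1 * t + z) + (1 * t + z) + (-1 * t + z)) / 2) with z in E by (field; exact two).
    replace ((1 * t + z + (1 * t + z) + (1 * t + z) + (-1 * t + z)) / 2) with (1*t+2*z) in E by (field; exact two).
    replace ((1 * t + z + (1 * t + z) - (1 * t + z) - (-1 * t + z)) / 2) with (1*t+0) in E by (field; exact two).
    replace ((1 * t + z - (1 * t + z) + (1 * t + z) - (-1 * t + z)) / 2) with (1*t+0) in E by (field; exact two).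
    replace ((1 * t + z - (1 * t + z) - (1 * t + z) + (-1 * t + z)) / 2) with (- (1*t+0)) in E by (field; exact two).
    rewrite Hodd in E. unfold F. match type of E with ?L = _ => transitivity L end; [ring | exact E]. }
  assert (D0 : forall t, Cderiv H0 t (H1 t)).
  { intro t. unfold H0, H1. eapply D_eq; [dtac | cbv beta; ring]. }
  assert (HH1 := D_zero _ _ HH0 D0).
  assert (D1 : forall t, Cderiv H1 t (H2 t)).
  { intro t. unfold H1, H2. eapply D_eq; [dtac | cbv beta; ring]. }
  assert (HH2 := D_zero _ _ HH1 D1).
  evar (e : C).
  assert (D2 : Cderiv H2 0 e).
  { unfold H2. dtac. }
  pose proof (D_zero_at _ _ _ HH2 D2) as E.
  unfold e in E; cbv beta in E.
  replace (1 * 0 + z) with z in E by ring.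
  replace (-1 * 0 + z) with z in E by ring.
  replace (2 * 0 + z) with z in E by ring.
  replace (1 * 0 + 2 * z) with (2 * z) in E by ring.
  replace (1 * 0 + 0) with (RtoC 0) in E by ring.
  rewrite Hf0 in E. unfold F in E.
  apply sub0.
  match type of E with ?L = _ =>
    transitivity (/ 6 * L); [unfold F; field | rewrite E; ring] end.
Qed.
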